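(* Let $\vdash\subseteq Sqt$ satisfy (A), (Mon), (Cut), (Com), ($\bot$), ($\wedge$I), ($\wedge$E), ($\to$0), ($\to$1), ($\to$2). Then for every $\varphi\in Form$ and every $\Gamma\in W^c_\vdash$: $\mathfrak M^c_\vdash,\Gamma\models\varphi$ iff $\varphi\in\Gamma$.
   Context: $Form$: $\varphi::=p\mid\bot\mid(\varphi\wedge\varphi)\mid(\varphi\to\varphi)$ over a countable set $P0$ ($\wedge$ left-associative, binds tighter than $\to$). Model $(W,R,V)$ with $W\ne\emptyset$, $R\subseteq W\times W$, $V:P0\to\wp(W)$; satisfaction: $\bot$ never true, $p$ true at $s$ iff $s\in V(p)$, $\wedge$ pointwise, $\varphi\to\psi$ true at $s$ iff every $R$-successor $t$ of $s$ satisfying $\varphi$ satisfies $\psi$. Sequents: $(\Gamma,\varphi)$ with $\Gamma\subseteq Form$; $\Gamma\vdash\varphi$ means $(\Gamma,\varphi)\in\vdash$; $\psi\vdash\varphi$ means $\{\psi\}\vdash\varphi$; $\vdash\varphi$ means $\emptyset\vdash\varphi$. Rules: (A) $\Gamma\cup\{\varphi\}\vdash\varphi$; (Mon) $\Gamma\subseteq\Delta$, $\Gamma\vdash\varphi\Rightarrow\Delta\vdash\varphi$; (Cut) $\Gamma\cup\{\psi\}\vdash\varphi$, $\Delta\vdash\psi\Rightarrow\Gamma\cup\Delta\vdash\varphi$; (Com) $\Gamma\vdash\varphi\Rightarrow\Gamma'\vdash\varphi$ for a finite $\Gamma'\subseteq\Gamma$; ($\bot$) $\bot\vdash\varphi$;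 ($\wedge$I) $\{\varphi,\psi\}\vdash\varphi\wedge\psi$; ($\wedge$E) $\varphi\wedge\psi\vdash\varphi$, $\varphi\wedge\psi\vdash\psi$; ($\to$0) $\vdash\varphi\to\varphi$; ($\to$1) $\Gamma\vdash\varphi\Rightarrow\{\psi\to\chi:\chi\in\Gamma\}\vdash\psi\to\varphi$; ($\to$2) $\{\varphi\to\psi,\psi\to\chi\}\vdash\varphi\to\chi$. $\Gamma$ is $\vdash$-consistent iff $\Gamma\nvdash\varphi$ for some $\varphi$; $\vdash$-deduction closed iff $\Gamma\vdash\psi\Rightarrow\psi\in\Gamma$. For $n\ge2$, $\vdash$ satisfies $(\alpha,\{\beta_1,\dots,\beta_n\})$ iff (i) for all $\Gamma,\varphi$: if $\Gamma\cup\{\beta_i\}\vdash\varphi$ for all $i$ then $\Gamma\cup\{\alpha\}\vdash\varphi$, and (ii) for all $\varphi,\psi_1,\dots,\psi_n$: $\{\psi_i\wedge\beta_i\to\varphi:1\le i\le n\}\vdash\psi_1\wedge\dots\wedge\psi_n\wedge\alpha\to\varphi$. $\Gamma$ is $\vdash$-prime iff whenever $\vdash$ satisfies $(\alpha,\{\beta_1,\dots,\beta_n\})$ ($n\ge2$) and $\alpha\in\Gamma$, some $\beta_i\in\Gamma$. $\Gamma R_\to\Delta$ iff $\varphi\to\psi\in\Gamma$ and $\varphi\in\Delta$ imply $\psi\in\Delta$. The canonical model $\mathfrak M^c_\vdash=(W^c_\vdash,R^c_\vdash,V^c_\vdash)$: $W^c_\vdash$ is the set of $\vdash$-consistent, $\vdash$-deduction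 closed, $\vdash$-prime subsets of $Form$; $R^c_\vdash=R_\to\cap(W^c_\vdash\times W^c_\vdash)$; $V^c_\vdash(p)=\{\Gamma\in W^c_\vdash:p\in\Gamma\}$. *)

(* Defs.v *)
From Stdlib Require Import List.
Import ListNotations.

(* Formulas over the countable set P0 of atoms, taken to be nat. *)
Inductive Form : Type :=
| Atom : nat -> Form
| Bot : Form
| And : Form -> Form -> Form
| Imp : Form -> Form -> Form.

(* Sets of formulas as predicates; a consequence relation is a set of sequents. *)
Definition FSet := Form -> Prop.
Definition Cons := FSet -> Form -> Prop.

Definition union (G D : FSet) : FSet := fun x => G x \/ D x.
Definition sing (a : Form) : FSet := fun x => x = a.
Definition pair (a b : Form) : FSet := fun x => x = a \/ x = b.
Definition emptyset : FSet := fun _ => False.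
Definition subset (G D : FSet) : Prop := forall x, G x -> D x.

Definition rule_A (d : Cons) := forall G phi, d (union G (sing phi)) phi.
Definition rule_Mon (d : Cons) := forall G D phi, subset G D -> d G phi -> d D phi.
Definition rule_Cut (d : Cons) := forall G D psi phi,
  d (union G (sing psi)) phi -> d D psi -> d (union G D) phi.
Definition rule_Com (d : Cons) := forall G phi, d G phi ->
  exists l : list Form, (forall x, In x l -> G x) /\ d (fun x => In x l) phi.
Definition rule_Bot (d : Cons) := forall phi, d (sing Bot) phi.
Definition rule_AndI (d : Cons) := forall phi psi, d (pair phi psi) (And phi psi).
Definition rule_AndE (d : Cons) := forall phi psi,
  d (sing (And phi psi)) phi /\ d (sing (And phi psi)) psi.
Definition rule_Imp0 (d : Cons) := forall phi, d emptyset (Imp phi phi).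
Definition rule_Imp1 (d : Cons) := forall G phi psi, d G phi ->
  d (fun x => exists chi, G chi /\ x = Imp psi chi) (Imp psi phi).
Definition rule_Imp2 (d : Cons) := forall phi psi chi,
  d (pair (Imp phi psi) (Imp psi chi)) (Imp phi chi).

Definition all_rules (d : Cons) : Prop :=
  rule_A d /\ rule_Mon d /\ rule_Cut d /\ rule_Com d /\ rule_Bot d /\
  rule_AndI d /\ rule_AndE d /\ rule_Imp0 d /\ rule_Imp1 d /\ rule_Imp2 d.

Definition bigAnd (ps : list Form) : Form :=
  match ps with
  | [] => Bot (* never used: lists have length >= 2 *)
  | p :: ps' => fold_left And ps' p
  end.

(* d satisfies (alpha, {beta_1,...,beta_n}), n >= 2; the beta's are given as a list. *)
Definition satisfies (d : Cons) (alpha : Form) (bs : list Form) : Prop :=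
  2 <= length bs /\
  (forall G phi, (forall b, In b bs -> d (union G (sing b)) phi) ->
                 d (union G (sing alpha)) phi) /\
  (forall phi (ps : list Form), length ps = length bs ->
     d (fun x => exists i, i < length bs /\
                 x = Imp (And (nth i ps Bot) (nth i bs Bot)) phi)
       (Imp (And (bigAnd ps) alpha) phi)).

Definition consistent (d : Cons) (G : FSet) : Prop := exists phi, ~ d G phi.
Definition ded_closed (d : Cons) (G : FSet) : Prop := forall psi, d G psi -> G psi.
Definition prime (d : Cons) (G : FSet) : Prop :=
  forall alpha bs, satisfies d alpha bs -> G alpha -> exists b, In b bs /\ G b.

Definition R_imp (G D : FSet) : Prop :=
  forall phi psi, G (Imp phi psi) -> D phi -> D psi.

Fixpoint sat {W : Type} (R : W -> W -> Prop) (V : nat -> W -> Prop)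
  (s : W) (phi : Form) : Prop :=
  match phi with
  | Atom p => V p s
  | Bot => False
  | And a b => sat R V s a /\ sat R V s b
  | Imp a b => forall t, R s t -> sat R V t a -> sat R V t b
  end.

Definition inWc (d : Cons) (G : FSet) : Prop :=
  consistent d G /\ ded_closed d G /\ prime d G.
Definition Wc (d : Cons) : Type := { G : FSet | inWc d G }.
Definition Rc (d : Cons) (G D : Wc d) : Prop := R_imp (proj1_sig G) (proj1_sig D).
Definition Vc (d : Cons) (p : nat) (G : Wc d) : Prop := proj1_sig G (Atom p).

(* Main.v *)
Require Import Defs.
From Stdlib Require Import List Classical Cantor Lia.
Import ListNotations.

Ltac rules Hd := destruct Hd as (HA & HMon & HCut & HCom & HBot & HAndI & HAndE & HI0 & HI1 & HI2).

Fixpoint enc (f : Form) : nat :=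
  match f with
  | Atom n => Cantor.to_nat (0, n)
  | Bot => Cantor.to_nat (1, 0)
  | And a b => Cantor.to_nat (2, Cantor.to_nat (enc a, enc b))
  | Imp a b => Cantor.to_nat (3, Cantor.to_nat (enc a, enc b))
  end.

Lemma to_nat_inj p q : Cantor.to_nat p = Cantor.to_nat q -> p = q.
Proof. intro H. rewrite <- (cancel_of_to p), <- (cancel_of_to q), H. reflexivity. Qed.

Lemma enc_inj : forall f g, enc f = enc g -> f = g.
Proof.
  induction f; destruct g; intro H; cbn [enc] in H; apply to_nat_inj in H;
    try discriminate; try reflexivity; try (injection H; intros; subst; reflexivity).
  - assert (E : to_nat (enc f1, enc f2) = to_nat (enc g1, enc g2)) by (injection H; auto).
    apply to_nat_inj in E. injection E; intros. f_equal; auto.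
  - assert (E : to_nat (enc f1, enc f2) = to_nat (enc g1, enc g2)) by (injection H; auto).
    apply to_nat_inj in E. injection E; intros. f_equal; auto.
Qed.


Lemma A1 d (Hd : all_rules d) x : d (sing x) x.
Proof.
  pose proof Hd as Hd'. rules Hd'.
  apply (HMon (union emptyset (sing x))). intros y [[]|H]; auto. apply HA.
Qed.

Lemma thm_imp d (Hd : all_rules d) x y : d (sing x) y -> d emptyset (Imp x y).
Proof.
  pose proof Hd as Hd'. rules Hd'. intro H.
  pose proof (HI1 _ _ x H) as H'. clear H. rename H' into H.
  apply (HMon (union emptyset emptyset)). intros z [z1|z1]; auto.
  apply (HCut _ _ (Imp x x)); [|apply HI0].
  eapply HMon; [|exact H]. intros z [chi [E1 E2]]. unfold sing in E1. subst. right. reflexivity.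
Qed.

Lemma inG_of d (Hd : all_rules d) (G S : FSet) x :
  ded_closed d G -> (forall y, S y -> G y) -> d S x -> G x.
Proof.
  pose proof Hd as Hd'. rules Hd'. intros Hc HS H. apply Hc. eapply HMon; eauto.
Qed.

Lemma thm_in d (Hd : all_rules d) (G : FSet) x :
  ded_closed d G -> d emptyset x -> G x.
Proof. intros Hc H. apply (inG_of d Hd G emptyset x Hc); auto. intros y []. Qed.

Lemma trans_in d (Hd : all_rules d) (G : FSet) x y z :
  ded_closed d G -> G (Imp x y) -> G (Imp y z) -> G (Imp x z).
Proof.
  pose proof Hd as Hd'. rules Hd'. intros Hc H1 H2.
  apply (inG_of d Hd G (pair (Imp x y) (Imp y z))); auto. intros w [E|E]; subst; auto.
Qed.

Lemma sing_in d (Hd : all_rules d) (G : FSet) x y :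
  ded_closed d G -> d (sing x) y -> G (Imp x y).
Proof. intros Hc H. apply thm_in with d; auto. apply thm_imp; auto. Qed.

Lemma cut_list d (Hd : all_rules d) (S : FSet) : forall (L : list Form) Gm chi,
  d (union Gm (fun x => In x L)) chi -> (forall x, In x L -> d S x) -> d (union Gm S) chi.
Proof.
  pose proof Hd as Hd'. rules Hd'.
  induction L as [|x L IH]; intros Gm chi H HL.
  - eapply HMon; [|exact H]. intros z [z1|[]]; left; auto.
  - assert (H1 : d (union (union Gm (fun y => In y L)) S) chi).
    { apply (HCut _ _ x); [|apply HL; simpl; auto].
      eapply HMon; [|exact H]. intros z [z1|[z1|z1]].
      - left; left; auto.
      - right; subst; reflexivity.
      - left; right; auto. }
    assert (H2 : d (union (union Gm S) (fun y => In y L)) chi).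
    { eapply HMon; [|exact H1]. intros z [[z1|z1]|z1]; [left;left|right|left;right]; auto. }
    apply IH in H2; [|intros; apply HL; simpl; auto].
    eapply HMon; [|exact H2]. intros z [[z1|z1]|z1]; [left|right|right]; auto.
Qed.

Lemma cut_fin d (Hd : all_rules d) (S : FSet) (L : list Form) chi :
  d (fun x => In x L) chi -> (forall x, In x L -> d S x) -> d S chi.
Proof.
  pose proof Hd as Hd'. rules Hd'. intros H HL.
  assert (d (union emptyset S) chi).
  { apply cut_list with L; auto. eapply HMon; [|exact H]. intros; right; auto. }
  eapply HMon; [|exact H0]. intros z [[]|z1]; auto.
Qed.

Definition good (d : Cons) (G : FSet) (b : Form) (D : FSet) : Prop :=
  forall chi, d D chi -> ~ G (Imp chi b).

Fixpoint chain (d : Cons) (G : FSet) (a b : Form) (n : nat) : FSet :=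
  match n with
  | 0 => sing a
  | S n => fun x => chain d G a b n x \/ (enc x = n /\ good d G b (union (chain d G a b n) (sing x)))
  end.

Lemma good_sub d (Hd : all_rules d) G b (S T : FSet) :
  (forall x, S x -> T x) -> good d G b T -> good d G b S.
Proof.
  pose proof Hd as Hd'. rules Hd'. intros HS HT chi H. apply HT. eapply HMon; eauto.
Qed.

Lemma chain_mono d G a b n m : n <= m -> forall x, chain d G a b n x -> chain d G a b m x.
Proof. induction 1; simpl; auto. Qed.

Lemma chain_good d (Hd : all_rules d) G a b :
  ded_closed d G -> ~ G (Imp a b) -> forall n, good d G b (chain d G a b n).
Proof.
  pose proof Hd as Hd'. rules Hd'. intros Hc Hab. induction n; simpl.
  - intros chi H Hchi. apply Hab. apply (trans_in d Hd G a chi b Hc); auto. apply (sing_in d Hd); auto.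
  - destruct (classic (exists x0, enc x0 = n /\ good d G b (union (chain d G a b n) (sing x0))))
      as [[x0 [E1 E2]]|Hn].
    + eapply good_sub; [eauto| |exact E2]. intros x [Hx|[Ex Gx]]; [left; auto|].
      right. apply enc_inj. congruence.
    + eapply good_sub; [eauto| |exact IHn]. intros x [Hx|Hx]; auto.
      exfalso; apply Hn; exists x; auto.
Qed.

Definition lim d G a b : FSet := fun x => exists n, chain d G a b n x.

Lemma lim_fin d G a b (L : list Form) :
  (forall x, In x L -> lim d G a b x) -> exists N, forall x, In x L -> chain d G a b N x.
Proof.
  induction L as [|y L IH]; intros HL.
  - exists 0; intros x [].
  - destruct IH as [N HN]. { intros; apply HL; simpl; auto. }
    destruct (HL y (or_introl eq_refl)) as [M HM].
    exists (N + M). intros x [E|Hx].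
    + subst. eapply chain_mono; [|exact HM]. lia.
    + eapply chain_mono; [|apply HN; auto]. lia.
Qed.

Lemma lim_good d (Hd : all_rules d) G a b :
  ded_closed d G -> ~ G (Imp a b) -> good d G b (lim d G a b).
Proof.
  pose proof Hd as Hd'. rules Hd'. intros Hc Hab chi H.
  destruct (HCom _ _ H) as [L [HL HdL]].
  destruct (lim_fin d G a b L HL) as [N HN].
  apply (chain_good d Hd G a b Hc Hab N). eapply HMon; [|exact HdL]. auto.
Qed.

Lemma lim_max d (Hd : all_rules d) G a b x :
  good d G b (union (lim d G a b) (sing x)) -> lim d G a b x.
Proof.
  intro H. exists (S (enc x)). simpl. right. split; auto.
  eapply good_sub; [eauto| |exact H]. intros y [Hy|Hy]; [left; exists (enc x); auto|right; auto].
Qed.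

Lemma lim_a d G a b : lim d G a b a.
Proof. exists 0. reflexivity. Qed.

Lemma lim_closed d (Hd : all_rules d) G a b :
  ded_closed d G -> ~ G (Imp a b) -> ded_closed d (lim d G a b).
Proof.
  pose proof Hd as Hd'. rules Hd'. intros Hc Hab psi H. apply (lim_max d Hd).
  intros chi H1 H2. apply (lim_good d Hd G a b Hc Hab chi); auto.
  pose proof (HCut _ _ _ _ H1 H) as H3. eapply HMon; [|exact H3]. intros z [z1|z1]; auto.
Qed.

Lemma and_in d (Hd : all_rules d) (D : FSet) x y :
  ded_closed d D -> D x -> D y -> D (And x y).
Proof.
  pose proof Hd as Hd'. rules Hd'. intros Hc H1 H2.
  apply (inG_of d Hd D (pair x y)); auto. intros z [E|E]; subst; auto.
Qed.

Lemma andE_in d (Hd : all_rules d) (D : FSet) x y :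
  ded_closed d D -> D (And x y) -> D x /\ D y.
Proof.
  pose proof Hd as Hd'. rules Hd'. intros Hc H. destruct (HAndE x y) as [E1 E2].
  split; apply (inG_of d Hd D (sing (And x y))); auto; intros z E; unfold sing in E; subst; auto.
Qed.

Lemma pair_step d (Hd : all_rules d) (D : FSet) a0 psi :
  ded_closed d D -> D a0 -> forall L : list Form, (forall x, In x L -> union D (sing psi) x) ->
  exists delta, D delta /\ forall x, In x L -> d (pair delta psi) x.
Proof.
  pose proof Hd as Hd'. rules Hd'. intros Hc Ha.
  induction L as [|y L IH]; intros HL.
  - exists a0; split; auto. intros x [].
  - destruct IH as [de [Hde Hx]]. { intros; apply HL; simpl; auto. }
    destruct (HL y (or_introl eq_refl)) as [Hy|Hy].
    + exists (And de y). split; [apply (and_in d Hd); auto|].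
      destruct (HAndE de y) as [E1 E2].
      intros x [Ex|Ex].
      * subst. eapply HMon; [|exact E2]. intros z E; left; auto.
      * pose proof (Hx x Ex) as Hdx.
        assert (H1 : d (union (sing psi) (sing de)) x).
        { eapply HMon; [|exact Hdx]. intros z [E|E]; [right|left]; auto. }
        pose proof (HCut _ _ _ _ H1 E1) as H2.
        eapply HMon; [|exact H2]. intros z [E|E]; [right|left]; auto.
    + exists de. split; auto. intros x [Ex|Ex]; auto.
      unfold sing in Hy. rewrite <- Ex, Hy. apply (HMon (sing psi)); [intros z E; right; auto|apply (A1 d Hd)].
Qed.

Lemma extract d (Hd : all_rules d) (G D : FSet) a0 psi chi :
  ded_closed d G -> ded_closed d D -> D a0 -> d (union D (sing psi)) chi ->
  exists delta, D delta /\ G (Imp (And delta psi) chi).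
Proof.
  pose proof Hd as Hd'. rules Hd'. intros HcG HcD Ha H.
  destruct (HCom _ _ H) as [L [HL HdL]].
  destruct (pair_step d Hd D a0 psi HcD Ha L HL) as [de [Hde Hx]].
  exists de. split; auto. apply (sing_in d Hd); auto.
  pose proof (cut_fin d Hd (pair de psi) L chi HdL Hx) as H1.
  destruct (HAndE de psi) as [E1 E2].
  apply (cut_fin d Hd _ [de; psi]).
  - eapply HMon; [|exact H1]. intros z [E|E]; subst; simpl; auto.
  - intros x [E|[E|[]]]; subst; auto.
Qed.

Lemma choose_list (P : Form -> Form -> Prop) : forall bs,
  (forall b, In b bs -> exists p, P p b) ->
  exists ps, length ps = length bs /\ forall i, i < length bs -> P (nth i ps Bot) (nth i bs Bot).
Proof.
  induction bs as [|b bs IH]; intros H.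
  - exists []. split; auto. intros i Hi; simpl in Hi; lia.
  - destruct IH as [ps [Hl Hp]]. { intros; apply H; simpl; auto. }
    destruct (H b (or_introl eq_refl)) as [p Hpb].
    exists (p :: ps). split; simpl; auto. intros [|i] Hi; simpl; auto. apply Hp. simpl in Hi; lia.
Qed.

Lemma bigAnd_in d (Hd : all_rules d) (D : FSet) ps :
  ded_closed d D -> ps <> [] -> (forall x, In x ps -> D x) -> D (bigAnd ps).
Proof.
  intros Hc Hne H. destruct ps as [|p l]; [congruence|]. simpl.
  assert (Hp : D p) by (apply H; simpl; auto).
  assert (Hl : forall x, In x l -> D x) by (intros; apply H; simpl; auto).
  clear H Hne. revert p Hp. induction l as [|y l IH]; intros p Hp; simpl; auto.
  apply IH; [intros; apply Hl; simpl; auto|]. apply (and_in d Hd); auto. apply Hl; simpl; auto.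
Qed.

Lemma not_good d G b D : ~ good d G b D -> exists chi, d D chi /\ G (Imp chi b).
Proof.
  intro H. apply NNPP. intro H1. apply H. intros chi H2 H3. apply H1. eauto.
Qed.

Lemma lim_in d (Hd : all_rules d) G a b x : lim d G a b x -> d (lim d G a b) x.
Proof.
  pose proof Hd as Hd'. rules Hd'. intro H.
  apply (HMon (sing x)); [intros z E; unfold sing in E; subst; auto|apply (A1 d Hd)].
Qed.

Lemma lim_R d (Hd : all_rules d) G a b :
  ded_closed d G -> ~ G (Imp a b) -> R_imp G (lim d G a b).
Proof.
  pose proof Hd as Hd'. rules Hd'. intros Hc Hab phi psi Himp Hphi.
  pose proof (lim_closed d Hd G a b Hc Hab) as HcD.
  apply (lim_max d Hd). intros chi H1 H2.
  destruct (extract d Hd G _ a psi chi Hc HcD (lim_a d G a b) H1) as [de [Hde Hx]].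
  assert (H3 : G (Imp (And de phi) (And de psi))).
  { apply (inG_of d Hd G (fun x => exists c, pair de psi c /\ x = Imp (And de phi) c)); auto.
    intros z [c [[E|E] E']]; subst.
    - apply (sing_in d Hd); auto. apply (HAndE de phi).
    - apply (trans_in d Hd G _ phi); auto. apply (sing_in d Hd); auto. apply (HAndE de phi). }
  apply (lim_good d Hd G a b Hc Hab (And de phi)).
  - apply (lim_in d Hd). apply (and_in d Hd); auto.
  - apply (trans_in d Hd G _ (And de psi)); auto. apply (trans_in d Hd G _ chi); auto.
Qed.

Lemma lim_prime d (Hd : all_rules d) G a b :
  ded_closed d G -> ~ G (Imp a b) -> prime d (lim d G a b).
Proof.
  pose proof Hd as Hd'. rules Hd'. intros Hc Hab alpha bs [Hlen [_ Hii]] Halpha.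
  pose proof (lim_closed d Hd G a b Hc Hab) as HcD.
  apply NNPP. intro Hn.
  assert (Hb : forall be, In be bs -> exists p, lim d G a b p /\ G (Imp (And p be) b)).
  { intros be Hbe.
    assert (Hng : ~ good d G b (union (lim d G a b) (sing be))).
    { intro Hg. apply Hn. exists be. split; auto. apply (lim_max d Hd); auto. }
    destruct (not_good _ _ _ _ Hng) as [chi [H1 H2]].
    destruct (extract d Hd G _ a be chi Hc HcD (lim_a d G a b) H1) as [de [Hde Hx]].
    exists de. split; auto. apply (trans_in d Hd G _ chi); auto. }
  destruct (choose_list (fun p be => lim d G a b p /\ G (Imp (And p be) b)) bs Hb) as [ps [Hl Hp]].
  pose proof (Hii b ps Hl) as H1.
  assert (H2 : G (Imp (And (bigAnd ps) alpha) b)).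
  { eapply (inG_of d Hd G _ _ Hc); [|exact H1]. intros z [i [Hi E]]; subst. apply Hp; auto. }
  apply (lim_good d Hd G a b Hc Hab _ ) in H2; auto.
  apply (lim_in d Hd). apply (and_in d Hd); auto. apply (bigAnd_in d Hd); auto.
  - intro E; subst; simpl in Hl; lia.
  - intros x Hx. destruct (In_nth _ _ Bot Hx) as [i [Hi E]]. subst. apply Hp. lia.
Qed.

Theorem mainTheorem12 (d : Cons) (Hd : all_rules d) :
  forall (phi : Form) (G : FSet) (HG : inWc d G),
    sat (Rc d) (Vc d) (exist _ G HG) phi <-> G phi.
Proof.
  pose proof Hd as Hd'. rules Hd'.
  induction phi as [n| |p1 IH1 p2 IH2|p1 IH1 p2 IH2]; intros G HG; simpl.
  - unfold Vc; simpl; tauto.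
  - split; [intros []|]. intro H. destruct HG as [[f Hf] [Hc Hp]]. apply Hf.
    apply (HMon (sing Bot)); [intros x E; unfold sing in E; subst; auto|apply HBot].
  - rewrite IH1, IH2. destruct HG as [Hcon [Hc Hp]]. split.
    + intros [H1 H2]. apply (and_in d Hd); auto.
    + intro H. apply (andE_in d Hd); auto.
  - destruct HG as [Hcon [Hc Hp]] eqn:EHG. split.
    + intro H. apply NNPP. intro Hab.
      assert (HD : inWc d (lim d G p1 p2)).
      { split; [|split].
        - exists p2. intro H1. apply (lim_good d Hd G p1 p2 Hc Hab p2 H1).
          apply (thm_in d Hd); auto.
        - apply (lim_closed d Hd); auto.
        - apply (lim_prime d Hd); auto. }
      specialize (H (exist _ _ HD)).
      assert (Hs : sat (Rc d) (Vc d) (exist _ _ HD) p2).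
      { apply H. - unfold Rc; simpl. apply (lim_R d Hd); auto.
        - apply IH1. apply lim_a. }
      apply IH2 in Hs.
      apply (lim_good d Hd G p1 p2 Hc Hab p2); [apply (lim_in d Hd); auto|].
      apply (thm_in d Hd); auto.
    + intros H [D HD] HR Ha. unfold Rc in HR; simpl in HR.
      apply IH1 in Ha. apply IH2. exact (HR _ _ H Ha).
Qed.
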